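(* Let $a<b$, $k>0$, $\lambda\in(0,\pi/2]$, and $f\in C^3([a,b])$ with $f'(a)=f'(b)=0$. Then there is a constant $C$ (depending only on $f,k,\lambda,a,b$) such that for every sequence $\{\epsilon_n\}$ with $\epsilon_n\in J_n$, the unique solution $y_{\epsilon_n}$ of $\epsilon_n y''+ky=f(t)$ on $[a,b]$, $y'(a)=y'(b)=0$, satisfies $$\sup_{t\in[a,b]}\Big|y_{\epsilon_n}(t)-\frac{f(t)}{k}\Big|\le C\,\epsilon_n\quad\text{for all }n.$$
   Context: For a fixed constant $\lambda\in(0,\pi/2]$ and $n=0,1,2,\dots$ define the closed intervals $$J_n=\left[\,k\left(\frac{b-a}{(n+1)\pi-\lambda}\right)^2,\ k\left(\frac{b-a}{n\pi+\lambda}\right)^2\,\right].$$ Note that $\epsilon\in J_n$ iff $\sqrt{k/\epsilon}\,(b-a)\in[n\pi+\lambda,(n+1)\pi-\lambda]$. *)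

(* Defs.v *)
From Stdlib Require Import Reals Lra.
Open Scope R_scope.

Definition Icc (a b : R) (x : R) : Prop := a <= x <= b.

(* f has derivative l at x relative to the set D (one-sided at endpoints
   of an interval): difference quotients through points of D converge. *)
Definition deriv_within (D : R -> Prop) (f : R -> R) (x l : R) : Prop :=
  forall eps, 0 < eps -> exists delta, 0 < delta /\
    forall h, h <> 0 -> Rabs h < delta -> D (x + h) ->
      Rabs ((f (x + h) - f x) / h - l) < eps.

Definition cont_within (D : R -> Prop) (g : R -> R) (x : R) : Prop :=
  forall eps, 0 < eps -> exists delta, 0 < delta /\
    forall y, D y -> Rabs (y - x) < delta -> Rabs (g y - g x) < eps.

Definition C3_on (a b : R) (f f1 f2 f3 : R -> R) : Prop :=
  forall t, Icc a b t ->
    deriv_within (Icc a b) f t (f1 t) /\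
    deriv_within (Icc a b) f1 t (f2 t) /\
    deriv_within (Icc a b) f2 t (f3 t) /\
    cont_within (Icc a b) f3 t.

Definition J (k lam a b : R) (n : nat) (eps : R) : Prop :=
  k * ((b - a) / ((INR n + 1) * PI - lam)) ^ 2 <= eps <=
  k * ((b - a) / (INR n * PI + lam)) ^ 2.

Definition is_solution (a b eps k : R) (f y y1 y2 : R -> R) : Prop :=
  (forall t, Icc a b t ->
     deriv_within (Icc a b) y t (y1 t) /\
     deriv_within (Icc a b) y1 t (y2 t) /\
     eps * y2 t + k * y t = f t) /\
  y1 a = 0 /\ y1 b = 0.

(* Main.v *)
Require Import Defs.
From Stdlib Require Import Reals Lra Psatz.
From Coquelicot Require Import Coquelicot.
Open Scope R_scope.

Definition clamp (a b x : R) := Rmax a (Rmin b x).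

Lemma clamp_in a b x : a <= b -> Icc a b (clamp a b x).
Proof. intros H; unfold clamp, Icc, Rmax, Rmin.
 repeat destruct Rle_dec; lra. Qed.

Lemma clamp_id a b x : Icc a b x -> clamp a b x = x.
Proof. unfold clamp, Icc, Rmax, Rmin; intros H.
 repeat destruct Rle_dec; lra. Qed.

Lemma clamp_lip a b x y : a <= b -> Rabs (clamp a b y - clamp a b x) <= Rabs (y - x).
Proof. intros H; unfold clamp, Rmax, Rmin.
 repeat destruct Rle_dec; unfold Rabs; repeat destruct Rcase_abs; lra. Qed.

Lemma cont_clamp a b F : a <= b ->
  (forall x, Icc a b x -> cont_within (Icc a b) F x) ->
  forall x, continuity_pt (fun x => F (clamp a b x)) x.
Proof.
  intros Hab HF x eps Heps.
  destruct (HF (clamp a b x) (clamp_in a b x Hab) eps Heps) as [d [Hd Hy]].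
  exists d; split; [lra|]. intros z [_ Hz].
  simpl in *; unfold R_dist in *.
  apply Hy. apply clamp_in; auto.
  eapply Rle_lt_trans; [apply clamp_lip; auto| exact Hz].
Qed.

Lemma deriv_cont D F x l : deriv_within D F x l -> cont_within D F x.
Proof.
  intros H eps Heps.
  destruct (H 1 Rlt_0_1) as [d [Hd Hq]].
  exists (Rmin d (eps / (Rabs l + 1))); split.
  { apply Rmin_pos; auto. apply Rdiv_lt_0_compat; auto. pose proof (Rabs_pos l); lra. }
  intros y Dy Hy.
  destruct (Req_dec y x) as [->|Hne].
  { rewrite Rminus_eq_0, Rabs_R0; auto. }
  assert (Hh : y - x <> 0) by lra.
  assert (Hyd : Rabs (y - x) < d) by (eapply Rlt_le_trans; [exact Hy| apply Rmin_l]).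
  assert (Hye : Rabs (y - x) < eps / (Rabs l + 1)) by (eapply Rlt_le_trans; [exact Hy| apply Rmin_r]).
  specialize (Hq (y - x) Hh Hyd). replace (x + (y - x)) with y in Hq by ring.
  specialize (Hq Dy).
  set (q := (F y - F x) / (y - x)) in Hq.
  assert (E : F y - F x = q * (y - x)) by (unfold q; field; auto).
  rewrite E, Rabs_mult.
  assert (Rabs q <= Rabs l + 1).
  { replace q with ((q - l) + l) by ring. eapply Rle_trans; [apply Rabs_triang|]. lra. }
  assert (0 < Rabs l + 1) by (pose proof (Rabs_pos l); lra).
  apply (Rmult_lt_compat_l (Rabs l + 1)) in Hye; auto.
  replace ((Rabs l + 1) * (eps / (Rabs l + 1))) with eps in Hye by (field; lra).
  pose proof (Rabs_pos (y - x)). pose proof (Rabs_pos q). nra.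
Qed.

Lemma deriv_interior a b F x l : a < x < b -> deriv_within (Icc a b) F x l ->
  derivable_pt_lim F x l.
Proof.
  intros Hx H eps Heps.
  destruct (H eps Heps) as [d [Hd Hq]].
  assert (Hp : 0 < Rmin d (Rmin (x - a) (b - x))).
  { repeat apply Rmin_pos; lra. }
  exists (mkposreal _ Hp). intros h Hh Hhd. simpl in Hhd.
  apply Hq; auto.
  - eapply Rlt_le_trans; [exact Hhd| apply Rmin_l].
  - pose proof (Rmin_r d (Rmin (x - a) (b - x))).
    pose proof (Rmin_l (x - a) (b - x)). pose proof (Rmin_r (x - a) (b - x)).
    unfold Icc. unfold Rabs in *; destruct Rcase_abs; lra.
Qed.

Lemma mvi a b F F' M s t : a <= s -> s <= t -> t <= b ->
  (forall x, a < x < b -> derivable_pt_lim F x (F' x)) ->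
  (forall x, Icc a b x -> Rabs (F' x) <= M) ->
  (forall x, continuity_pt (fun x => F (clamp a b x)) x) ->
  Rabs (F t - F s) <= M * (t - s).
Proof.
  intros Has Hst Htb HD HM HC.
  destruct (Req_dec s t) as [<-|Hne].
  { rewrite Rminus_eq_0, Rabs_R0. assert (0 <= M).
    { eapply Rle_trans; [apply Rabs_pos| apply (HM s); unfold Icc; lra]. } lra. }
  set (G := fun x => F (clamp a b x)).
  destruct (MVT_gen G s t F') as [c [Hc E]].
  - rewrite Rmin_left, Rmax_right by lra. intros x Hx.
    apply is_derive_ext_loc with F.
    + apply locally_interval with (Finite a) (Finite b); simpl; try lra.
      intros y Hy1 Hy2. unfold G. rewrite clamp_id; auto. unfold Icc; lra.
    + apply is_derive_Reals. apply HD. lra.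
  - intros; apply HC.
  - rewrite Rmin_left, Rmax_right in Hc by lra.
    unfold G in E. rewrite !clamp_id in E by (unfold Icc; lra).
    rewrite E, Rabs_mult, (Rabs_right (t - s)) by lra.
    apply Rmult_le_compat_r; [lra|]. apply HM. unfold Icc; lra.
Qed.

Lemma sin_shift n y : Rabs (sin (y + INR n * PI)) = Rabs (sin y).
Proof.
  induction n.
  - simpl. f_equal. f_equal. ring.
  - rewrite S_INR. replace (y + (INR n + 1) * PI) with ((y + INR n * PI) + PI) by ring.
    rewrite neg_sin, Rabs_Ropp. auto.
Qed.

Lemma my_sin_lb n lam x : 0 < lam <= PI / 2 ->
  INR n * PI + lam <= x <= (INR n + 1) * PI - lam -> sin lam <= Rabs (sin x).
Proof.
  intros Hl Hx. pose proof PI_RGT_0.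
  set (y := x - INR n * PI).
  replace x with (y + INR n * PI) by (unfold y; ring). rewrite sin_shift.
  assert (lam <= y <= PI - lam) by (unfold y; nra).
  assert (0 <= sin y) by (apply sin_ge_0; lra).
  rewrite Rabs_right by lra.
  destruct (Rle_dec y (PI/2)).
  - apply sin_incr_1; lra.
  - rewrite <- (sin_PI_x y). apply sin_incr_1; lra.
Qed.

Lemma Fderiv (w w1 g g1 : R -> R) om t x :
  0 < om ->
  derivable_pt_lim w x (w1 x) ->
  derivable_pt_lim w1 x (- om ^ 2 * w x + g x) ->
  derivable_pt_lim g x (g1 x) ->
  derivable_pt_lim (fun s => w1 s * sin (om * (t - s)) + om * w s * cos (om * (t - s))
       - g s * cos (om * (t - s)) / om) x (- g1 x * cos (om * (t - x)) / om).
Proof.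
  intros Hom H1 H2 H3.
  apply is_derive_Reals.
  apply is_derive_Reals in H1. apply is_derive_Reals in H2. apply is_derive_Reals in H3.
  auto_derive.
  - repeat split; eexists; eauto.
  - replace (Derive (fun x0 => w1 x0) x) with (- om ^ 2 * w x + g x) by (symmetry; apply is_derive_unique; exact H2).
    replace (Derive (fun x0 => w x0) x) with (w1 x) by (symmetry; apply is_derive_unique; exact H1).
    replace (Derive (fun x0 => g x0) x) with (g1 x) by (symmetry; apply is_derive_unique; exact H3).
    unfold Rdiv. replace (t + - x) with (t - x) by ring. field. lra.
Qed.

Lemma clamp_cont a b x : a <= b -> continuity_pt (fun x => clamp a b x) x.
Proof.
  intros Hab. apply (cont_clamp a b (fun x => x) Hab).
  intros y _ eps He. exists eps; split; auto.
Qed.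

Lemma trig_cont a b om t x : a <= b ->
  continuity_pt (fun x => sin (om * (t - clamp a b x))) x /\
  continuity_pt (fun x => cos (om * (t - clamp a b x))) x.
Proof.
  intros Hab. split.
  - apply (continuity_pt_comp (fun x => clamp a b x) (fun s => sin (om * (t - s)))).
    + apply clamp_cont; auto.
    + apply derivable_continuous_pt. reg.
  - apply (continuity_pt_comp (fun x => clamp a b x) (fun s => cos (om * (t - s)))).
    + apply clamp_cont; auto.
    + apply derivable_continuous_pt. reg.
Qed.

Lemma Fcont a b om t (w w1 g : R -> R) x : a <= b ->
  (forall x, continuity_pt (fun x => w (clamp a b x)) x) ->
  (forall x, continuity_pt (fun x => w1 (clamp a b x)) x) ->
  (forall x, continuity_pt (fun x => g (clamp a b x)) x) ->
  continuity_pt (fun x => (fun s => w1 s * sin (om * (t - s)) + om * w s * cos (om * (t - s))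
       - g s * cos (om * (t - s)) / om) (clamp a b x)) x.
Proof.
  intros Hab Hw Hw1 Hg. cbv beta.
  destruct (trig_cont a b om t x Hab) as [Hs Hc].
  apply continuity_pt_minus; [apply continuity_pt_plus|].
  - apply continuity_pt_mult; auto.
  - apply continuity_pt_mult; auto. apply continuity_pt_mult; auto. apply continuity_pt_const. intros ? ?; auto.
  - unfold Rdiv. apply continuity_pt_mult; [apply continuity_pt_mult; auto|]. apply continuity_pt_const. intros ? ?; auto.
Qed.

Lemma key a b om m0 m1 S (w w1 g g1 : R -> R) :
  a < b -> 0 < om -> 0 < S <= 1 -> S <= Rabs (sin (om * (b - a))) ->
  (forall x, a < x < b -> derivable_pt_lim w x (w1 x)) ->
  (forall x, a < x < b -> derivable_pt_lim w1 x (- om ^ 2 * w x + g x)) ->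
  (forall x, a < x < b -> derivable_pt_lim g x (g1 x)) ->
  (forall x, continuity_pt (fun x => w (clamp a b x)) x) ->
  (forall x, continuity_pt (fun x => w1 (clamp a b x)) x) ->
  (forall x, continuity_pt (fun x => g (clamp a b x)) x) ->
  (forall x, Icc a b x -> Rabs (g x) <= m0) ->
  (forall x, Icc a b x -> Rabs (g1 x) <= m1) ->
  w1 a = 0 -> w1 b = 0 ->
  forall t, Icc a b t -> Rabs (w t) <= (3 * m1 * (b - a) / S ^ 2 + m0) / om ^ 2.
Proof.
  intros Hab Hom HS HsS Dw Dw1 Dg Cw Cw1 Cg Bg Bg1 Ha Hb t Ht.
  set (Ft := fun t s => w1 s * sin (om * (t - s)) + om * w s * cos (om * (t - s))
       - g s * cos (om * (t - s)) / om).
  assert (HB : forall t s1 s2, a <= s1 -> s1 <= s2 -> s2 <= b ->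
             Rabs (Ft t s2 - Ft t s1) <= m1 / om * (s2 - s1)).
  { intros t0 s1 s2 H1 H2 H3.
    apply (mvi a b (Ft t0) (fun x => - g1 x * cos (om * (t0 - x)) / om)); auto.
    - intros x Hx. apply Fderiv; auto.
    - intros x Hx. unfold Rdiv. rewrite !Rabs_mult, Rabs_Ropp, (Rabs_inv om), (Rabs_right om) by lra.
      pose proof (COS_bound (om * (t0 - x))). 
      assert (Rabs (cos (om * (t0 - x))) <= 1) by (unfold Rabs; destruct Rcase_abs; lra).
      pose proof (Rabs_pos (cos (om * (t0 - x)))). pose proof (Bg1 x Hx).
      pose proof (Rabs_pos (g1 x)).
      assert (0 < / om) by (apply Rinv_0_lt_compat; auto).
      assert (Rabs (g1 x) * Rabs (cos (om * (t0 - x))) <= m1) by nra.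
      apply Rmult_le_compat_r; lra.
    - intros x. apply Fcont; auto; lra. }
  assert (m1p : 0 <= m1) by (eapply Rle_trans; [apply Rabs_pos|apply (Bg1 a); unfold Icc; lra]).
  set (X := fun s => om * w s - g s / om).
  assert (Ftt : forall t, Ft t t = X t).
  { intros t0. unfold Ft, X. rewrite Rminus_eq_0, Rmult_0_r, sin_0, cos_0. field. lra. }
  assert (Fta : forall t, Ft t a = cos (om * (t - a)) * X a).
  { intros t0. unfold Ft, X. rewrite Ha. field. lra. }
  assert (Ftb : forall t, Ft t b = cos (om * (t - b)) * X b).
  { intros t0. unfold Ft, X. rewrite Hb. field. lra. }
  set (e := m1 / om * (b - a)).
  assert (e0 : 0 <= e) by (unfold e; apply Rmult_le_pos; [apply Rdiv_le_0_compat|]; lra).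
  set (c := cos (om * (b - a))).
  assert (E1 : Rabs (X b - c * X a) <= e).
  { pose proof (HB b a b) as H. rewrite Ftt, Fta in H. apply H; lra. }
  assert (E2 : Rabs (c * X b - X a) <= e).
  { pose proof (HB a a b) as H. rewrite Ftt, Ftb in H.
    replace (om * (a - b)) with (- (om * (b - a))) in H by ring. rewrite cos_neg in H.
    apply H; lra. }
  set (s := sin (om * (b - a))).
  assert (sc : s ^ 2 = 1 - c ^ 2) by (pose proof (sin2 (om * (b - a))) as Hs2; unfold Rsqr in Hs2; fold s c in Hs2; nra).
  assert (cb : Rabs c <= 1) by (pose proof (COS_bound (om * (b - a))); unfold c, Rabs; destruct Rcase_abs; lra).
  assert (EXa : S ^ 2 * Rabs (X a) <= 2 * e).
  { assert (Id : s ^ 2 * X a = - (c * X b - X a) + c * (X b - c * X a)) by (rewrite sc; ring).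
    assert (Rabs (s ^ 2 * X a) <= 2 * e).
    { rewrite Id. eapply Rle_trans; [apply Rabs_triang|]. rewrite Rabs_Ropp, Rabs_mult.
      pose proof (Rabs_pos (X b - c * X a)). pose proof (Rabs_pos c). nra. }
    rewrite Rabs_mult, <- RPow_abs in H.
    assert (S ^ 2 <= Rabs s ^ 2) .
 { apply pow_incr; split; [lra|exact HsS]. }
    pose proof (Rabs_pos (X a)). nra. }
  assert (EXt : Rabs (X t - cos (om * (t - a)) * X a) <= e).
  { pose proof (HB t a t) as H. rewrite Ftt, Fta in H. unfold Icc in Ht.
    eapply Rle_trans; [apply H; lra|]. unfold e.
    apply Rmult_le_compat_l; [apply Rdiv_le_0_compat|]; lra. }
  assert (Xt : Rabs (X t) <= e + 2 * e / S ^ 2).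
  { assert (Rabs (X a) <= 2 * e / S ^ 2).
    { apply Rmult_le_reg_l with (S ^ 2). apply pow_lt; lra.
      replace (S ^ 2 * (2 * e / S ^ 2)) with (2 * e) by (field; lra). auto. }
    replace (X t) with ((X t - cos (om * (t - a)) * X a) + cos (om * (t - a)) * X a) by ring.
    eapply Rle_trans; [apply Rabs_triang|]. rewrite Rabs_mult.
    assert (Rabs (cos (om * (t - a))) <= 1) by (pose proof (COS_bound (om * (t - a))); unfold Rabs; destruct Rcase_abs; lra).
    pose proof (Rabs_pos (X a)). pose proof (Rabs_pos (cos (om * (t - a)))). nra. }
  assert (wt : w t = (X t + g t / om) / om) by (unfold X; field; lra).
  rewrite wt. unfold Rdiv at 1. rewrite Rabs_mult, (Rabs_inv om), (Rabs_right om) by lra.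
  assert (Rabs (X t + g t / om) <= e + 2 * e / S ^ 2 + m0 / om).
  { eapply Rle_trans; [apply Rabs_triang|].
    assert (Rabs (g t / om) <= m0 / om).
    { unfold Rdiv. rewrite (Rabs_mult (g t)), (Rabs_inv om), (Rabs_right om) by lra.
      pose proof (Bg t Ht). assert (0 < / om) by (apply Rinv_0_lt_compat; auto).
      apply Rmult_le_compat_r; lra. }
    lra. }
  assert (e + 2 * e / S ^ 2 + m0 / om <= (3 * m1 * (b - a) / S ^ 2 + m0) / om).
  { unfold e. assert (0 < S ^ 2 <= 1) by (split; [apply pow_lt; lra| nra]).
    assert (m1 * (b - a) <= m1 * (b - a) / S ^ 2).
    { apply Rmult_le_reg_l with (S ^ 2); [lra|]. replace (S ^ 2 * (m1 * (b - a) / S ^ 2)) with (m1 * (b - a)) by (field; lra).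
      assert (0 <= m1 * (b - a)) by nra. nra. }
    replace ((3 * m1 * (b - a) / S ^ 2 + m0) / om) with
      ((m1 * (b - a) / S ^ 2 + 2 * (m1 * (b - a) / S ^ 2) + m0) / om) by (field; lra).
    replace (m1 / om * (b - a) + 2 * (m1 / om * (b - a)) / S ^ 2 + m0 / om) with
      ((m1 * (b - a) + 2 * (m1 * (b - a) / S ^ 2) + m0) / om) by (field; lra).
    unfold Rdiv at 1 3. apply Rmult_le_compat_r; [left; apply Rinv_0_lt_compat; lra| lra]. }
  replace ((3 * m1 * (b - a) / S ^ 2 + m0) / om ^ 2) with (((3 * m1 * (b - a) / S ^ 2 + m0) / om) * / om) by (field; lra).
  apply Rmult_le_compat_r; [left; apply Rinv_0_lt_compat; lra| lra].
Qed.

Lemma dlin (u v : R -> R) u' v' k x : k <> 0 -> derivable_pt_lim u x u' ->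
  derivable_pt_lim v x v' -> derivable_pt_lim (fun s => u s - v s / k) x (u' - v' / k).
Proof.
  intros Hk H1 H2. apply is_derive_Reals. apply is_derive_Reals in H1. apply is_derive_Reals in H2.
  auto_derive.
  - repeat split; eexists; eauto.
  - replace (Derive (fun x0 => u x0) x) with u' by (symmetry; apply is_derive_unique; exact H1).
    replace (Derive (fun x0 => v x0) x) with v' by (symmetry; apply is_derive_unique; exact H2).
    field. auto.
Qed.

Lemma dconst0 x : derivable_pt_lim (fun _ => 0) x 0.
Proof. apply derivable_pt_lim_const. Qed.

Lemma clin a b (u v : R -> R) k :
  (forall x, continuity_pt (fun x => u (clamp a b x)) x) ->
  (forall x, continuity_pt (fun x => v (clamp a b x)) x) ->
  forall x, continuity_pt (fun x => u (clamp a b x) - v (clamp a b x) / k) x.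
Proof.
  intros Hu Hv x. apply continuity_pt_minus; auto.
  unfold Rdiv. apply continuity_pt_mult; auto. apply continuity_pt_const. intros ? ?; auto.
Qed.

Lemma abs_bound a b (F : R -> R) : a <= b ->
  (forall x, Icc a b x -> cont_within (Icc a b) F x) ->
  exists M, forall x, Icc a b x -> Rabs (F x) <= M.
Proof.
  intros Hab HF.
  destruct (continuity_ab_maj (fun x => Rabs (F (clamp a b x))) a b Hab) as [Mx [HM _]].
  - intros c _. apply (continuity_pt_comp (fun x => F (clamp a b x)) Rabs).
    + apply cont_clamp; auto.
    + apply Rcontinuity_abs.
  - exists (Rabs (F (clamp a b Mx))). intros x Hx. specialize (HM x Hx).
    rewrite clamp_id in HM by auto. auto.
Qed.

Lemma sq_le p q : 0 < p -> 0 <= q -> p ^ 2 <= q ^ 2 -> p <= q.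
Proof. intros. nra. Qed.

Theorem mainTheorem4 (a b k lam : R) (f f1 f2 f3 : R -> R)
  (hab : a < b) (hk : 0 < k) (hlam : 0 < lam <= PI / 2)
  (hf : C3_on a b f f1 f2 f3) (hfa : f1 a = 0) (hfb : f1 b = 0) :
  exists C : R,
    forall epsn : nat -> R, (forall n, J k lam a b n (epsn n)) ->
    forall n (y y1 y2 : R -> R), is_solution a b (epsn n) k f y y1 y2 ->
    forall t, Icc a b t -> Rabs (y t - f t / k) <= C * epsn n.
Proof.
  pose proof PI_RGT_0 as HPI.
  assert (Hab' : a <= b) by lra.
  assert (P2 : forall x, Icc a b x -> cont_within (Icc a b) f2 x).
  { intros x Hx. destruct (hf x Hx) as (_ & _ & H & _). eapply deriv_cont; eauto. }
  assert (P3 : forall x, Icc a b x -> cont_within (Icc a b) f3 x).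
  { intros x Hx. destruct (hf x Hx) as (_ & _ & _ & H). auto. }
  destruct (abs_bound a b f2 Hab' P2) as [M2 HM2].
  destruct (abs_bound a b f3 Hab' P3) as [M3 HM3].
  set (Sl := sin lam).
  assert (HSl : 0 < Sl <= 1).
  { unfold Sl; split; [apply sin_gt_0; lra| apply SIN_bound]. }
  set (m0 := M2 / k). set (m1 := M3 / k).
  exists ((3 * m1 * (b - a) / Sl ^ 2 + m0) / k).
  intros epsn HJ n y y1 y2 [Hsol [Hy1a Hy1b]] t Ht.
  set (eps := epsn n).
  specialize (HJ n). fold eps in HJ, Hsol. destruct HJ as [HJ1 HJ2].
  assert (D1 : 0 < (INR n + 1) * PI - lam).
  { pose proof (pos_INR n). nra. }
  assert (D2 : 0 < INR n * PI + lam).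
  { pose proof (pos_INR n). nra. }
  assert (Heps : 0 < eps).
  { eapply Rlt_le_trans; [|exact HJ1]. apply Rmult_lt_0_compat; auto.
    apply pow_lt. apply Rdiv_lt_0_compat; lra. }
  set (om := sqrt (k / eps)).
  assert (Hkeps : 0 < k / eps) by (apply Rdiv_lt_0_compat; auto).
  assert (Hom : 0 < om) by (apply sqrt_lt_R0; auto).
  assert (Hom2 : om ^ 2 = k / eps) by (unfold om; rewrite <- Rsqr_pow2; apply Rsqr_sqrt; lra).
  assert (Hint : INR n * PI + lam <= om * (b - a) <= (INR n + 1) * PI - lam).
  { split.
    - apply sq_le; [lra| apply Rmult_le_pos; lra|].
      assert (E : eps * (INR n * PI + lam) ^ 2 <= k * (b - a) ^ 2).
      { replace (k * ((b - a) / (INR n * PI + lam)) ^ 2) with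
          (k * (b - a) ^ 2 / (INR n * PI + lam) ^ 2) in HJ2 by (field; lra).
        assert (0 < (INR n * PI + lam) ^ 2) by (apply pow_lt; lra).
        apply Rmult_le_compat_r with (r := (INR n * PI + lam) ^ 2) in HJ2; [|lra].
        replace (k * (b - a) ^ 2 / (INR n * PI + lam) ^ 2 * (INR n * PI + lam) ^ 2)
          with (k * (b - a) ^ 2) in HJ2 by (field; lra). lra. }
      replace ((om * (b - a)) ^ 2) with (k / eps * (b - a) ^ 2) by (rewrite <- Hom2; ring).
      apply Rmult_le_reg_l with eps; auto.
      replace (eps * (k / eps * (b - a) ^ 2)) with (k * (b - a) ^ 2) by (field; lra). lra.
    - apply sq_le; [apply Rmult_lt_0_compat; lra| lra|].
      assert (E : k * (b - a) ^ 2 <= eps * ((INR n + 1) * PI - lam) ^ 2).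
      { replace (k * ((b - a) / ((INR n + 1) * PI - lam)) ^ 2) with
          (k * (b - a) ^ 2 / ((INR n + 1) * PI - lam) ^ 2) in HJ1 by (field; lra).
        assert (0 < ((INR n + 1) * PI - lam) ^ 2) by (apply pow_lt; lra).
        apply Rmult_le_compat_r with (r := ((INR n + 1) * PI - lam) ^ 2) in HJ1; [|lra].
        replace (k * (b - a) ^ 2 / ((INR n + 1) * PI - lam) ^ 2 * ((INR n + 1) * PI - lam) ^ 2)
          with (k * (b - a) ^ 2) in HJ1 by (field; lra). lra. }
      replace ((om * (b - a)) ^ 2) with (k / eps * (b - a) ^ 2) by (rewrite <- Hom2; ring).
      apply Rmult_le_reg_l with eps; auto.
      replace (eps * (k / eps * (b - a) ^ 2)) with (k * (b - a) ^ 2) by (field; lra). lra. }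
  assert (HsS : Sl <= Rabs (sin (om * (b - a)))) by (apply (my_sin_lb n lam); auto).
  assert (Hkn : k <> 0) by lra.
  pose proof (key a b om m0 m1 Sl (fun s => y s - f s / k) (fun s => y1 s - f1 s / k)
     (fun s => 0 - f2 s / k) (fun s => 0 - f3 s / k) hab Hom HSl HsS) as K.
  assert (Hdy : forall x, a < x < b -> derivable_pt_lim y x (y1 x)).
  { intros x Hx. destruct (Hsol x ltac:(unfold Icc; lra)) as [H _]. eapply deriv_interior; eauto. }
  assert (Hdy1 : forall x, a < x < b -> derivable_pt_lim y1 x (y2 x)).
  { intros x Hx. destruct (Hsol x ltac:(unfold Icc; lra)) as [_ [H _]]. eapply deriv_interior; eauto. }
  assert (Hdf : forall x, a < x < b -> derivable_pt_lim f x (f1 x)).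
  { intros x Hx. destruct (hf x ltac:(unfold Icc; lra)) as [H _]. eapply deriv_interior; eauto. }
  assert (Hdf1 : forall x, a < x < b -> derivable_pt_lim f1 x (f2 x)).
  { intros x Hx. destruct (hf x ltac:(unfold Icc; lra)) as [_ [H _]]. eapply deriv_interior; eauto. }
  assert (Hdf2 : forall x, a < x < b -> derivable_pt_lim f2 x (f3 x)).
  { intros x Hx. destruct (hf x ltac:(unfold Icc; lra)) as [_ [_ [H _]]]. eapply deriv_interior; eauto. }
  assert (Ccl : forall F F1, (forall x, Icc a b x -> deriv_within (Icc a b) F x (F1 x)) ->
     forall x, continuity_pt (fun x => F (clamp a b x)) x).
  { intros F F1 HF. apply cont_clamp; auto. intros x Hx. eapply deriv_cont; eauto. }
  assert (Cy : forall x, continuity_pt (fun x => y (clamp a b x)) x)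
    by (apply (Ccl y y1); intros x Hx; apply (Hsol x Hx)).
  assert (Cy1 : forall x, continuity_pt (fun x => y1 (clamp a b x)) x)
    by (apply (Ccl y1 y2); intros x Hx; apply (Hsol x Hx)).
  assert (Cf : forall x, continuity_pt (fun x => f (clamp a b x)) x)
    by (apply (Ccl f f1); intros x Hx; apply (hf x Hx)).
  assert (Cf1 : forall x, continuity_pt (fun x => f1 (clamp a b x)) x)
    by (apply (Ccl f1 f2); intros x Hx; apply (hf x Hx)).
  assert (Cf2 : forall x, continuity_pt (fun x => f2 (clamp a b x)) x)
    by (apply (Ccl f2 f3); intros x Hx; apply (hf x Hx)).
  assert (C0 : forall x, continuity_pt (fun x => (fun _ : R => 0) (clamp a b x)) x)
    by (intros x; apply continuity_pt_const; intros ? ?; auto).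
  assert (Hm0 : forall x, Icc a b x -> Rabs (0 - f2 x / k) <= m0).
  { intros x Hx. unfold m0. replace (0 - f2 x / k) with (- f2 x * / k) by (field; lra).
    rewrite Rabs_mult, Rabs_Ropp, (Rabs_inv k), (Rabs_right k) by lra.
    apply Rmult_le_compat_r; [left; apply Rinv_0_lt_compat; lra| auto]. }
  assert (Hm1 : forall x, Icc a b x -> Rabs (0 - f3 x / k) <= m1).
  { intros x Hx. unfold m1. replace (0 - f3 x / k) with (- f3 x * / k) by (field; lra).
    rewrite Rabs_mult, Rabs_Ropp, (Rabs_inv k), (Rabs_right k) by lra.
    apply Rmult_le_compat_r; [left; apply Rinv_0_lt_compat; lra| auto]. }
  specialize (K (fun x Hx => dlin _ _ _ _ k x Hkn (Hdy x Hx) (Hdf x Hx))).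
  specialize (K ltac:(intros x Hx; cbv beta;
     assert (E : y2 x - f2 x / k = - om ^ 2 * (y x - f x / k) + (0 - f2 x / k));
     [ destruct (Hsol x ltac:(unfold Icc; lra)) as [_ [_ Heq]]; rewrite Hom2;
       apply Rmult_eq_reg_l with eps; [|lra];
       replace (eps * (- (k / eps) * (y x - f x / k) + (0 - f2 x / k))) with
         (- k * y x + f x - eps * f2 x / k) by (field; lra);
       replace (eps * (y2 x - f2 x / k)) with (eps * y2 x - eps * f2 x / k) by (field; lra);
       lra
     | rewrite <- E; apply dlin; auto ])).
  specialize (K (fun x Hx => dlin _ _ _ _ k x Hkn (dconst0 x) (Hdf2 x Hx))).
  specialize (K (clin a b y f k Cy Cf) (clin a b y1 f1 k Cy1 Cf1)
                (clin a b (fun _ => 0) f2 k C0 Cf2) Hm0 Hm1).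
  assert (E0a : y1 a - f1 a / k = 0) by (rewrite Hy1a, hfa; field; lra).
  assert (E0b : y1 b - f1 b / k = 0) by (rewrite Hy1b, hfb; field; lra).
  specialize (K E0a E0b t Ht). cbv beta in K.
  eapply Rle_trans; [exact K|]. rewrite Hom2. right. field. split; lra.
Qed.
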